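(* Let $\mathcal{K}$ be a learning space (respectively, a well-graded $\cup$-closed family) on a domain $Q=\bigcup\mathcal{K}$ with $|Q|\ge 2$, and let $Q'$ be a proper non-empty subset of $Q$. Then: (i) the projection $\mathcal{K}_{|Q'}$ is a learning space (respectively, a well-graded $\cup$-closed family); (ii) in either case, every $Q'$-child of $\mathcal{K}$ is a well-graded $\cup$-closed family.
   Context: All sets are finite. $d(K,L)=|K\triangle L|$. A family is well-graded if any two distinct members $K,L$ are joined by a sequence $K_0=K,\dots,K_n=L$ of members with $n=d(K,L)$ and $d(K_i,K_{i+1})=1$. A family is $\cup$-closed if the union of any non-empty subfamily belongs to it. A knowledge structure is a family $\mathcal{K}$ of subsets of $Q=\bigcup\mathcal{K}\neq\varnothing$ with $\varnothing\in\mathcal{K}$. A learning space is a knowledge structure satisfying: [L1] for $K\subset L$ in $\mathcal{K}$ with $|L\setminus K|=n$ there is a chain $K=K_0\subset\dots\subset K_n=L$ with $K_{i+1}=K_i\cup\{q_i\}\in\mathcal{K}$, $q_i\notin K_i$; [L2] if $K\subset L$ in $\mathcal{K}$ and $K\cup\{q\}\in\mathcal{K}$ with $q\notin K$ then $L\cup\{q\}\in\mathcal{K}$. For $Q'\subset Q$: $K\sim L$ iff $K\cap Q'=L\cap Q'$, $[K]$ the equivalence class of $K$; projection $\mathcal{K}_{|Q'}=\{K\cap Q':K\in\mathcal{K}\}$; the $Q'$-child of $\mathcal{K}$ determined by $K$ is $\mathcal{K}_{[K]}=\{L\setminus\bigcap[K]: L\in\mathcal{K}, L\sim K\}$ (it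 may equal $\{\varnothing\}$, which is regarded as well-graded and $\cup$-closed). *)

(* Defs.v *)
From mathcomp Require Import all_boot.
Set Implicit Arguments. Unset Strict Implicit. Unset Printing Implicit Defensive.

Section Fam.
Variable T : finType.
Implicit Types (F : {set {set T}}) (A B Qp : {set T}).

Definition domain F : {set T} := \bigcup_(X in F) X.

Definition sdiff A B : {set T} := (A :\: B) :|: (B :\: A).
Definition dist A B : nat := #|sdiff A B|.

Definition well_graded F : Prop :=
  forall K L, K \in F -> L \in F -> K != L ->
    exists s : seq {set T},
      [/\ all (fun X => X \in F) s,
          path (fun X Y => dist X Y == 1) K s,
          last K s = L &
          size s = dist K L].

Definition union_closed F : Prop :=
  forall S : {set {set T}}, S \subset F -> S != set0 ->
    \bigcup_(X in S) X \in F.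

Definition wg_uclosed F : Prop := well_graded F /\ union_closed F.

Definition knowledge_structure F : Prop :=
  set0 \in F /\ domain F != set0.

Definition L1 F : Prop :=
  forall K L, K \in F -> L \in F -> K \proper L ->
    exists s : seq {set T},
      [/\ all (fun X => X \in F) s,
          path (fun X Y : {set T} => [exists q : T, (q \notin X) && (Y == q |: X)]) K s,
          last K s = L &
          size s = #|L :\: K|].

Definition L2 F : Prop :=
  forall K L q, K \in F -> L \in F -> K \proper L ->
    q \notin K -> q |: K \in F -> q |: L \in F.

Definition learning_space F : Prop :=
  [/\ knowledge_structure F, L1 F & L2 F].

Definition proj F Qp : {set {set T}} := [set X :&: Qp | X in F].

Definition eqclass F Qp K : {set {set T}} :=
  [set L in F | L :&: Qp == K :&: Qp].

Definition child F Qp K : {set {set T}} :=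
  [set L :\: (\bigcap_(M in eqclass F Qp K) M) | L in eqclass F Qp K].

End Fam.

(* Main.v *)
Require Import Defs.
From mathcomp Require Import all_boot.
From mathcomp Require Import zify.
Set Implicit Arguments. Unset Strict Implicit. Unset Printing Implicit Defensive.

Section Aux.
Variable T : finType.
Implicit Types (F G E : {set {set T}}) (A B C K L M U V X Y Q : {set T}).

Lemma in_sdiff A B y : (y \in sdiff A B) = (y \in A) (+) (y \in B).
Proof. by rewrite !inE; case: (y \in A); case: (y \in B). Qed.

Lemma dist_sym A B : dist A B = dist B A.
Proof. by rewrite /dist /sdiff setUC. Qed.

Lemma dist0 A B : dist A B = 0 -> A = B.
Proof.
move=> /eqP; rewrite cards_eq0 => /eqP H; apply/setP=> y.
have : (y \in sdiff A B) = (y \in set0) by rewrite H.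
rewrite in_sdiff inE.
by case: (y \in A); case: (y \in B).
Qed.

Lemma dist_tri A B C : dist A C <= dist A B + dist B C.
Proof.
rewrite /dist; apply: leq_trans (leq_card_setU _ _).
apply: subset_leq_card; apply/subsetP=> y; rewrite in_setU !in_sdiff.
by case: (y \in A); case: (y \in B); case: (y \in C).
Qed.

Lemma sdiff1P A C x : sdiff A C = [set x] -> forall y, (y \in C) = (y \in A) (+) (y == x).
Proof.
move=> H y; have : (y \in sdiff A C) = (y \in [set x]) by rewrite H.
rewrite in_sdiff inE => <-.
by case: (y \in A); case: (y \in C).
Qed.

Lemma toggle_dist A C U x : sdiff A C = [set x] ->
  if x \in sdiff A U then dist C U + 1 = dist A U else dist C U = dist A U + 1.
Proof.
move=> H; have HC := sdiff1P H.
have E1 : sdiff C U :\ x = sdiff A U :\ x.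
  apply/setP=> y; rewrite !in_setD1 !in_sdiff HC.
  by have [->|ne] := eqVneq y x; rewrite ?addbF.
rewrite /dist (cardsD1 x (sdiff C U)) (cardsD1 x (sdiff A U)) E1 !in_sdiff HC eqxx addbT.
by case: (x \in A); case: (x \in U) => /=; lia.
Qed.

Lemma sdiff_add A x : x \notin A -> sdiff A (x |: A) = [set x].
Proof.
move=> xA; apply/setP=> y; rewrite in_sdiff !inE.
by have [->|_] := eqVneq y x; [rewrite (negbTE xA) | case: (y \in A)].
Qed.

Lemma up_dist A B x : x \notin A -> x \in B ->
  dist A (x |: A) = 1 /\ dist (x |: A) B + 1 = dist A B.
Proof.
move=> xA xB; split; first by rewrite /dist sdiff_add // cards1.
have := @toggle_dist A (x |: A) B x (sdiff_add xA).
by rewrite in_sdiff (negbTE xA) xB.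
Qed.

Lemma path_dist X s : path (fun X Y => dist X Y == 1) X s -> dist X (last X s) <= size s.
Proof.
elim: s X => [|Y s IH] X /=; first by rewrite /dist /sdiff !setDv setU0 cards0.
move=> /andP[/eqP h p]; apply: leq_trans (dist_tri X Y _) _.
by rewrite h add1n ltnS; exact: IH.
Qed.

Definition up_prop F := forall A U, A \in F -> U \in F -> A \subset U -> A != U ->
  exists x, [/\ x \in U, x \notin A & x |: A \in F].

Definition step_prop F := forall A B, A \in F -> B \in F -> A != B ->
  exists2 C, C \in F & (dist A C = 1 /\ dist C B + 1 = dist A B)
                       \/ (dist B C = 1 /\ dist A C + 1 = dist A B).

Lemma wg_of_step F : step_prop F -> well_graded F.
Proof.
move=> H K L; move: {2}(dist K L) (leqnn (dist K L)) => n.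
elim: n K L => [|n IH] K L hn KF LF KL.
  by move: hn; rewrite leqn0 => /eqP /dist0 E; rewrite E eqxx in KL.
have [C CF [[h1 h2]|[h1 h2]]] := H K L KF LF KL.
- have [CL|CL] := eqVneq C L.
    rewrite -CL; exists [:: C]; split => //=; by rewrite ?CF ?h1 ?eqxx.
  have [|s [sa sp sl ss]] := IH C L _ CF LF CL; first by lia.
  by exists (C :: s); split => /=; rewrite ?CF ?h1 ?eqxx //; lia.
- have [KC|KC] := eqVneq K C.
    rewrite -KC dist_sym in h1; exists [:: L]; split => //=; by rewrite ?LF ?h1 ?eqxx.
  have [|s [sa sp sl ss]] := IH K C _ KF CF KC; first by lia.
  exists (rcons s L); split.
  + by rewrite all_rcons LF.
  + by rewrite rcons_path sp sl dist_sym h1 eqxx.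
  + by rewrite last_rcons.
  + by rewrite size_rcons; lia.
Qed.

Lemma union2 F A B : union_closed F -> A \in F -> B \in F -> A :|: B \in F.
Proof.
move=> H AF BF.
have -> : A :|: B = \bigcup_(X in [set A; B]) X.
  apply/setP=> y; rewrite inE; apply/orP/bigcupP.
  - by case=> h; [exists A | exists B]; rewrite ?inE ?eqxx ?orbT.
  - by case=> X; rewrite !inE => /orP[] /eqP -> yX; [left|right].
apply: (H [set A; B]); first by apply/subsetP=> X; rewrite !inE => /orP[] /eqP ->.
by apply/set0Pn; exists A; rewrite !inE eqxx.
Qed.

Lemma step_of_up F : up_prop F -> union_closed F -> step_prop F.
Proof.
move=> Hu Hc A B AF BF AB.
have [BA|nBA] := boolP (B \subset A).
- have BA' : B != A by rewrite eq_sym.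
  have [x [xA xB xF]] := Hu B A BF AF BA BA'.
  exists (x |: B) => //; right.
  have [h1 h2] := up_dist xB xA.
  by split=> //; rewrite dist_sym (dist_sym A B).
- have UF := union2 Hc AF BF.
  have AU : A \subset A :|: B by exact: subsetUl.
  have nAU : A != A :|: B.
    by apply: contra nBA => /eqP E; rewrite E subsetUr.
  have [x [xU xA xF]] := Hu A _ AF UF AU nAU.
  have xB : x \in B by move: xU; rewrite inE (negbTE xA).
  by exists (x |: A) => //; left; exact: up_dist.
Qed.

Lemma up_of_wg F : well_graded F -> up_prop F.
Proof.
move=> H A U AF UF AU nAU.
have [s [sa sp sl ss]] := H A U AF UF nAU.
case: s sa sp sl ss => [|C s] /=; first by move=> _ _ E; rewrite E eqxx in nAU.
move=> /andP[CF sa] /andP[/eqP h1 sp] sl ss.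
have hb := path_dist sp; rewrite sl in hb.
have [x hx] : exists x, sdiff A C = [set x] by apply/cards1P; rewrite -/(dist A C) h1.
have := @toggle_dist A C U x hx.
case: ifP => hxs ht; last by lia.
have xA : x \notin A.
  by apply/negP => xA; move: hxs; rewrite in_sdiff xA (subsetP AU _ xA).
have xU : x \in U by move: hxs; rewrite in_sdiff (negbTE xA).
exists x; split => //.
have -> : x |: A = C.
  apply/setP=> y; rewrite (sdiff1P hx) !inE.
  by have [->|_] := eqVneq y x; rewrite ?(negbTE xA) ?addbF.
done.
Qed.

Lemma sub_last X s : path (fun X Y : {set T} => X \subset Y) X s -> X \subset last X s.
Proof.
elim: s X => [|Y s IH] X /=; first by [].
by move=> /andP[h p]; exact: subset_trans h (IH _ p).
Qed.

Lemma up_of_L1 F : L1 F -> up_prop F.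
Proof.
move=> H A U AF UF AU nAU.
have pAU : A \proper U by rewrite properEneq nAU AU.
have [s [sa sp sl ss]] := H A U AF UF pAU.
case: s sa sp sl ss => [|C s] /=.
  move=> _ _ _ /esym/eqP; rewrite cards_eq0 setD_eq0 => UA.
  by rewrite eqEsubset AU UA in nAU.
move=> /andP[CF _] /andP[/existsP[q /andP[qA /eqP CE]] sp] sl _.
exists q; split => //; last by rewrite -CE.
have : C \subset U.
  rewrite -sl; apply: sub_last; apply: sub_path sp => X Y /existsP[q' /andP[_ /eqP ->]].
  exact: subsetUr.
by move/subsetP; apply; rewrite CE setU11.
Qed.

Lemma uc_of_pair F : (forall A B, A \in F -> B \in F -> A :|: B \in F) -> union_closed F.
Proof.
move=> H S SF /set0Pn[X0 X0S].
have X0F := subsetP SF _ X0S.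
have -> : \bigcup_(X in S) X = X0 :|: \bigcup_(X in S) X.
  by apply/esym/setUidPr; exact: bigcup_sup.
apply: (big_ind (fun Y => X0 :|: Y \in F)).
- by rewrite setU0.
- by move=> Y Z hY hZ; rewrite setUUr; exact: H.
- by move=> X XS; exact: H _ _ X0F (subsetP SF _ XS).
Qed.

Lemma card_step L K q : q \in L -> q \notin K -> #|L :\: K| = (#|L :\: (q |: K)|).+1.
Proof.
move=> qL qK; rewrite (cardsD1 q (L :\: K)) inE qL qK /= add1n.
have -> : (L :\: K) :\ q = L :\: (q |: K).
  apply/setP=> y; rewrite !inE.
  by have [->|_] := eqVneq y q; rewrite ?andbF.
done.
Qed.

Lemma pair_of_LS F : set0 \in F -> up_prop F -> L2 F ->
  forall A B, A \in F -> B \in F -> A :|: B \in F.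
Proof.
move=> F0 Hu H2 A B AF BF.
suff: forall n X, #|B :\: X| <= n -> X \in F -> X \subset B -> A :|: X \in F -> A :|: B \in F.
  by move/(_ _ set0 (leqnn _) F0 (sub0set _)); rewrite setU0; apply.
elim=> [|n IH] X hn XF XB AX.
  move: hn; rewrite leqn0 cards_eq0 setD_eq0 => BX.
  have XB' : X = B by apply/eqP; rewrite eqEsubset XB BX.
  by rewrite -XB'.
have [XB'|nXB] := eqVneq X B; first by rewrite -XB'.
have [q [qB qX qF]] := Hu X B XF BF XB nXB.
apply: (IH (q |: X)).
- by move: hn; rewrite (card_step qB qX).
- done.
- by apply/subsetP=> y; rewrite !inE => /orP[/eqP->|/(subsetP XB)].
have E : A :|: (q |: X) = q |: (A :|: X) by rewrite setUCA.
rewrite E.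
have [qAX|qAX] := boolP (q \in A :|: X).
  have -> : q |: (A :|: X) = A :|: X.
    by apply/setP=> y; rewrite in_setU1; have [->|_] := eqVneq y q; rewrite ?qAX.
  done.
have [h|h] := eqVneq X (A :|: X); first by rewrite -h.
apply: (H2 X) => //.
by rewrite properEneq h subsetUr.
Qed.

Lemma L1_of_up F : up_prop F -> L1 F.
Proof.
move=> Hu K0 L K0F LF /properP[K0L _].
suff aux : forall n K, #|L :\: K| = n -> K \in F -> K \subset L ->
  exists s : seq {set T},
      [/\ all (fun X => X \in F) s,
          path (fun X Y : {set T} => [exists q : T, (q \notin X) && (Y == q |: X)]) K s,
          last K s = L &
          size s = #|L :\: K|].
  exact: aux.
elim=> [|n IH] K hn KF KL.
  exists [::]; split => //=; try by rewrite hn.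
  by apply/eqP; rewrite eqEsubset KL /= -setD_eq0 -cards_eq0 hn.
have nKL : K != L.
  by apply/negP => /eqP E; move: hn; rewrite E setDv cards0.
have [q [qL qK qF]] := Hu K L KF LF KL nKL.
have hc := card_step qL qK.
have [||s [sa sp sl ss]] := IH (q |: K) _ qF.
- by move: hn; rewrite hc => -[].
- by apply/subsetP=> y; rewrite !inE => /orP[/eqP->|/(subsetP KL)].
exists (q |: K :: s); split => /=.
- by rewrite qF.
- by rewrite sp andbT; apply/existsP; exists q; rewrite qK eqxx.
- done.
- by rewrite ss hc.
Qed.

Lemma L2_of_uc F : union_closed F -> L2 F.
Proof.
move=> H K L q KF LF KL qK qKF.
have -> : q |: L = (q |: K) :|: L by rewrite -setUA (setUidPr (proper_sub KL)).
exact: union2 H qKF LF.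
Qed.

Lemma bigcupI (S : {set {set T}}) Q : (\bigcup_(X in S) X) :&: Q = \bigcup_(X in S) (X :&: Q).
Proof.
apply/setP=> y; rewrite inE; apply/andP/bigcupP => [[/bigcupP[X XS yX] yQ]|[X XS]].
- by exists X; rewrite // inE yX yQ.
- by rewrite inE => /andP[yX yQ]; split=> //; apply/bigcupP; exists X.
Qed.

Lemma bigcupD (S : {set {set T}}) M : (\bigcup_(X in S) X) :\: M = \bigcup_(X in S) (X :\: M).
Proof.
apply/setP=> y; rewrite inE; apply/andP/bigcupP => [[yM /bigcupP[X XS yX]]|[X XS]].
- by exists X; rewrite // inE yX yM.
- by rewrite inE => /andP[yM yX]; split=> //; apply/bigcupP; exists X.
Qed.

Lemma uc_image F (f : {set T} -> {set T}) :
  (forall S : {set {set T}}, f (\bigcup_(X in S) X) = \bigcup_(X in S) f X) ->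
  union_closed F -> union_closed (f @: F).
Proof.
move=> Hf H S SF /set0Pn[Y YS].
pose S' := [set X in F | f X \in S].
have -> : \bigcup_(X in S) X = f (\bigcup_(X in S') X).
  rewrite Hf; apply/setP=> y; apply/bigcupP/bigcupP => [[Z ZS yZ]|[X]].
  - have /imsetP[X XF EZ] := subsetP SF _ ZS; subst Z.
    by exists X; rewrite // inE XF ZS.
  - by rewrite inE => /andP[_ fXS] yX; exists (f X).
apply: imset_f; apply: H; first by apply/subsetP=> X; rewrite inE => /andP[].
have /imsetP[X XF EY] := subsetP SF _ YS.
by apply/set0Pn; exists X; rewrite inE XF -EY YS.
Qed.

Lemma up_proj F Q : up_prop F -> union_closed F -> up_prop (proj F Q).
Proof.
move=> Hu Hc a u /imsetP[A AF ->] /imsetP[U UF ->] au nau.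
pose V := A :|: U.
have VF : V \in F := union2 Hc AF UF.
have VQ : V :&: Q = U :&: Q.
  apply/setP=> y; rewrite !inE; have := subsetP au y; rewrite !inE.
  by case: (y \in A); case: (y \in U); case: (y \in Q) => //= /(_ isT).
suff: forall n A', #|V :\: A'| <= n -> A' \in F -> A' \subset V -> A' :&: Q = A :&: Q ->
  exists x, [/\ x \in U :&: Q, x \notin A :&: Q & x |: (A :&: Q) \in proj F Q].
  apply; [exact: leqnn | exact: AF | exact: subsetUl | by []].
elim=> [|n IH] A' hn A'F A'V A'Q.
  have nA'V : A' != V by apply/eqP=> E; move/eqP: nau; rewrite -A'Q E VQ; by apply.
  move: hn; rewrite leqn0 cards_eq0 setD_eq0 => VA'.
  by move: nA'V; rewrite eqEsubset A'V VA'.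
have nA'V : A' != V by apply/eqP=> E; move/eqP: nau; rewrite -A'Q E VQ; by apply.
have [x [xV xA' xF]] := Hu A' V A'F VF A'V nA'V.
have [xQ|xQ] := boolP (x \in Q).
- exists x; split.
  + by rewrite -VQ inE xV xQ.
  + by rewrite -A'Q inE (negbTE xA').
  + have -> : x |: (A :&: Q) = (x |: A') :&: Q.
      rewrite -A'Q; apply/setP=> y; rewrite !inE.
      by have [->|_] := eqVneq y x; rewrite ?xQ.
    exact: imset_f.
- apply: (IH (x |: A')).
  + by move: hn; rewrite (card_step xV xA').
  + done.
  + by apply/subsetP=> y; rewrite in_setU1 => /orP[/eqP->|/(subsetP A'V)].
  + rewrite -A'Q; apply/setP=> y; rewrite !inE.
    by have [->|_] := eqVneq y x; rewrite ?(negbTE xQ) ?andbF.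
Qed.

Lemma up_class F Q K0 : up_prop F -> up_prop (eqclass F Q K0).
Proof.
move=> Hu A U; rewrite /eqclass !inE => /andP[AF /eqP AQ] /andP[UF /eqP UQ] AU nAU.
have [x [xU xA xF]] := Hu A U AF UF AU nAU.
have xQ : x \notin Q.
  apply/negP=> xQ; have : x \in U :&: Q by rewrite inE xU xQ.
  by rewrite UQ -AQ inE (negbTE xA).
exists x; split=> //; rewrite inE xF /=; apply/eqP; rewrite -AQ; apply/setP=> y; rewrite !inE.
by have [->|_] := eqVneq y x; rewrite ?(negbTE xQ) ?andbF.
Qed.

Lemma uc_class F Q K0 : union_closed F -> union_closed (eqclass F Q K0).
Proof.
move=> H S SE S0.
have SF : S \subset F.
  by apply/subsetP=> X /(subsetP SE); rewrite /eqclass inE => /andP[].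
rewrite /eqclass inE H //=; apply/eqP; rewrite bigcupI.
have [X XS] := set0Pn _ S0.
apply/setP=> y; apply/bigcupP/idP => [[Z ZS yZ]|yK].
- by move: yZ; have := subsetP SE _ ZS; rewrite /eqclass inE => /andP[_ /eqP ->].
- have := subsetP SE _ XS; rewrite /eqclass inE => /andP[_ /eqP E].
  by exists X; rewrite ?E.
Qed.

Lemma up_diff E M : up_prop E -> (forall L, L \in E -> M \subset L) ->
  up_prop [set L :\: M | L in E].
Proof.
move=> Hu HM a u /imsetP[A AE ->] /imsetP[U UE ->] au nau.
have AU : A \subset U.
  apply/subsetP=> y yA; have [yM|yM] := boolP (y \in M).
    exact: (subsetP (HM _ UE)).
  by have := subsetP au y; rewrite !inE yM yA => /(_ isT) /andP[].
have nAU : A != U by apply/eqP=> EAU; move/eqP: nau; apply; rewrite EAU.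
have [x [xU xA xE]] := Hu A U AE UE AU nAU.
have xM : x \notin M by apply: contra xA; apply: (subsetP (HM _ AE)).
exists x; split.
- by rewrite inE xM xU.
- by rewrite inE (negbTE xA) andbF.
- have -> : x |: (A :\: M) = (x |: A) :\: M.
    apply/setP=> y; rewrite !inE.
    by have [->|_] := eqVneq y x; rewrite ?(negbTE xM).
  exact: imset_f.
Qed.

End Aux.

Theorem mainTheorem5 (T : finType) (K : {set {set T}}) (Qp : {set T}) :
  1 < #|domain K| ->
  Qp \proper domain K -> Qp != set0 ->
  [/\ (learning_space K -> learning_space (proj K Qp)),
      (wg_uclosed K -> wg_uclosed (proj K Qp)) &
      (learning_space K \/ wg_uclosed K ->
         forall K0, K0 \in K -> wg_uclosed (child K Qp K0))].
Proof.
move=> _ QpK Qp0.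
have upuc : learning_space K \/ wg_uclosed K -> up_prop K /\ union_closed K.
  case=> [[[K0 _] HL1 HL2] | [Hw Hc]].
  - have Hu := up_of_L1 HL1; split=> //; apply: uc_of_pair; exact: pair_of_LS.
  - by split=> //; exact: up_of_wg.
have projok : up_prop K -> union_closed K ->
    up_prop (proj K Qp) /\ union_closed (proj K Qp).
  move=> Hu Hc; split; first exact: up_proj.
  by apply: uc_image => // S; exact: bigcupI.
split.
- move=> HLS; have [Hu Hc] := upuc (or_introl HLS); have [Hu' Hc'] := projok Hu Hc.
  split; [|exact: L1_of_up|exact: L2_of_uc].
  split.
    apply/imsetP; exists set0; first by case: HLS => [[]].
    by rewrite set0I.
  have [x xQ] := set0Pn _ Qp0.
  have /bigcupP[Y YK xY] : x \in domain K := subsetP (proper_sub QpK) _ xQ.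
  apply/set0Pn; exists x; apply/bigcupP; exists (Y :&: Qp); first exact: imset_f.
  by rewrite inE xY xQ.
- move=> HW; have [Hu Hc] := upuc (or_intror HW); have [Hu' Hc'] := projok Hu Hc.
  by split => //; apply: wg_of_step; exact: step_of_up.
- move=> H K0 K0K; have [Hu Hc] := upuc H.
  have HuE := @up_class T K Qp K0 Hu; have HcE := @uc_class T K Qp K0 Hc.
  have HcC : union_closed (child K Qp K0).
    by rewrite /child; apply: uc_image => // S; exact: bigcupD.
  split=> //; apply: wg_of_step; apply: step_of_up => //.
  rewrite /child; apply: up_diff => // L LE; exact: bigcap_inf.
Qed.
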